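(* Let $A$ be an arbitrary modal algebra and let $S$ be a countable subset of $\mathcal{P}(A)$. Then the map $f:A\to K(\bar J_S(A))$ given by $f(x)=\{F\in Q_S(A)\mid x\in F\}$ is an injective homomorphism of modal algebras, and for every $X\in S$ such that $\bigwedge X$ exists in $A$, $f(\bigwedge X)=\bigcap_{x\in X}f(x)$.
   Context: A modal algebra is a structure $\langle A;\lor,\land,-,\Box,0,1\rangle$ whose reduct is a Boolean algebra and $\Box$ is an arbitrary unary operation. A homomorphism of modal algebras is a Boolean homomorphism commuting with $\Box$. A prime filter is a proper filter $F$ with $x\lor y\in F\Rightarrow x\in F$ or $y\in F$. For $S\subseteq\mathcal{P}(A)$, a Q-filter for $S$ is a prime filter $F$ such that for every $X\in S$, if $\bigwedge X$ exists in $A$ and $X\subseteq F$ then $\bigwedge X\in F$; $Q_S(A)$ is the set of these. For a neighborhood frame $Z=\langle C,\mathcal{V}\rangle$ ($C\neq\emptyset$, $\mathcal{V}:C\to\mathcal{P}(\mathcal{P}(C))$), $K(Z)=\langle\mathcal{P}(C);\cup,\cap,C\setminus-,\Box_Z,\emptyset,C\rangle$ with $\Box_Z X=\{c\mid X\in\mathcal{V}(c)\}$. $\bar J_S(A)=\langle Q_S(A),\bar{\mathcal{V}}_A\rangle$ with $\bar{\mathcal{V}}_A(F)=\{\{G\in Q_S(A)\mid x\in G\}\mid x\in A,\ \Box x\in F\}$. *)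

(* Defs.v *)
From HB Require Import structures.
From mathcomp Require Import all_boot all_order.
From mathcomp Require Import boolp classical_sets cardinality.
Import Order.TTheory.

Set Implicit Arguments.
Unset Strict Implicit.
Unset Printing Implicit Defensive.

Local Open Scope classical_set_scope.
Local Open Scope order_scope.

Section ModalDefs.
Context {d : Order.disp_t} {A : ctbDistrLatticeType d}.

Definition is_meet (X : set A) (m : A) : Prop :=
  (forall x, X x -> m <= x) /\ (forall l, (forall x, X x -> l <= x) -> l <= m).

Definition proper_filter (F : set A) : Prop :=
  [/\ F \top, ~ F \bot,
      (forall x y, F x -> x <= y -> F y) &
      (forall x y, F x -> F y -> F (Order.meet x y))].

Definition prime_filter (F : set A) : Prop :=
  proper_filter F /\ (forall x y, F (Order.join x y) -> F x \/ F y).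

Definition Qfilter (S : set (set A)) (F : set A) : Prop :=
  prime_filter F /\
  (forall X, S X -> forall m, is_meet X m -> X `<=` F -> F m).

Definition Qpt (S : set (set A)) := {F : set A | Qfilter S F}.

Definition JbarV (S : set (set A)) (box : A -> A) : Qpt S -> set (set (Qpt S)) :=
  fun F Y => exists x, proj1_sig F (box x) /\ Y = (fun G : Qpt S => proj1_sig G x).

Definition Qrep (S : set (set A)) (x : A) : set (Qpt S) :=
  fun G => proj1_sig G x.

End ModalDefs.
Arguments JbarV {d A} S box _ _.
Arguments Qrep {d A} S x _.
Arguments Qfilter {d A} S F.
Arguments Qpt {d A} S.

(* \Box_Z of the complex algebra K(Z) of a neighbourhood frame Z = <W, V> *)
Definition Kbox (W : Type) (V : W -> set (set W)) (X : set W) : set W :=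
  fun c => V c X.

Definition K_modal_hom {d : Order.disp_t} {A : ctbDistrLatticeType d}
  (box : A -> A) (W : Type) (V : W -> set (set W)) (h : A -> set W) : Prop :=
  (forall x y, h (Order.join x y) = h x `|` h y) /\
  (forall x y, h (Order.meet x y) = h x `&` h y) /\
  (forall x, h (Order.compl x) = ~` h x) /\
  h \bot = set0 /\ h \top = setT /\
  (forall x, h (box x) = Kbox V (h x)).

(* Main.v *)
Require Import Defs.
From HB Require Import structures.
From mathcomp Require Import all_boot all_order.
From mathcomp Require Import boolp classical_sets cardinality.
Import Order.Theory.
Local Open Scope order_scope.
Local Open Scope classical_set_scope.

Section Ultra.
Context {d : Order.disp_t} {A : ctbDistrLatticeType d}.

Lemma pf_maximal_ultra (F : set A) :
  proper_filter F ->
  (forall F', proper_filter F' -> F `<=` F' -> F' `<=` F) ->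
  forall x, F x \/ F (Order.compl x).
Proof.
move=> [Ftop Fbot Fup Fmeet] Fmax x.
case: (pselect (F (Order.compl x))) => Hc; first by right.
left.
pose Fx := fun z => exists f, F f /\ Order.meet f x <= z.
have PFx : proper_filter Fx.
  split.
  - by exists \top; split => //; exact: lex1.
  - move=> [f [Ff]]; rewrite lex0 => /eqP H; apply: Hc; apply: (Fup f) => //.
    by rewrite -disj_leC H.
  - move=> u v [f [Ff Hf]] uv; exists f; split => //; exact: le_trans uv.
  - move=> u v [f [Ff Hf]] [g [Fg Hg]]; exists (Order.meet f g); split; first exact: Fmeet.
    rewrite lexI; apply/andP; split.
      apply: le_trans Hf; apply: leI2 => //; exact: leIl.
    apply: le_trans Hg; apply: leI2 => //; exact: leIr.
apply: (Fmax Fx PFx).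
  by move=> f Ff; exists f; split => //; exact: leIl.
by exists \top; split => //; exact: leIr.
Qed.

Lemma ultra_prime (F : set A) :
  proper_filter F -> (forall x, F x \/ F (Order.compl x)) -> prime_filter F.
Proof.
move=> PF; have [Ftop Fbot Fup Fmeet] := PF => Fu; split => // x y Fxy.
case: (Fu x) => Hx; first by left.
right; apply: (Fup _ _ (Fmeet _ _ Hx Fxy)).
by rewrite meetUr meetCx join0x leIr.
Qed.

Lemma ultra_ext (G : set A) : proper_filter G ->
  exists F, prime_filter F /\ G `<=` F.
Proof.
move=> PG; have [Gtop Gbot Gup Gmeet] := PG.
pose P := fun H : set A => proper_filter (G `|` H).
have [H [PH Hmax]] : exists H, P H /\ forall B, H `<` B -> ~ P B.
  apply: Zorn_bigcup => C CP Ctot.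
  have inH : forall H, C H -> forall x, (G `|` H) x -> (G `|` \bigcup_(X in C) X) x.
    by move=> H CH x [Gx|Hx]; [left|right; exists H].
  split.
  - by left.
  - case => [//|[H CH Hb]]; by have [_ Hb' _ _] := CP H CH; apply: Hb'; right.
  - move=> x y [Gx|[H CH Hx]] xy; first by left; exact: Gup xy.
    have [_ _ Hup _] := CP H CH; apply: (inH H CH); apply: (Hup x) => //; by right.
  - move=> x y [Gx|[H CH Hx]] [Gy|[H' CH' Hy]].
    + by left; apply: Gmeet.
    + have [_ _ _ Hm] := CP H' CH'; apply: (inH H' CH'); apply: Hm; [left|right] => //.
    + have [_ _ _ Hm] := CP H CH; apply: (inH H CH); apply: Hm; [right|left] => //.
    + case: (Ctot H H' CH CH') => sub.
        have [_ _ _ Hm] := CP H' CH'; apply: (inH H' CH'); apply: Hm; right => //; exact: sub.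
      have [_ _ _ Hm] := CP H CH; apply: (inH H CH); apply: Hm; right => //; exact: sub.
exists (G `|` H); split; last by move=> x Gx; left.
apply: ultra_prime => //; apply: pf_maximal_ultra => // F' PF' sub.
have GF' : G `|` F' = F' by apply/seteqP; split => [x [Gx|]|x Fx] //; [apply: sub; left|right].
have PF'' : P F' by rewrite /P /= GF'.
move=> x F'x; right.
case: (pselect (F' `<=` H)) => [/(_ x F'x)//|nsub].
exfalso; apply: (Hmax F') => //; split => // y Hy; apply: sub; by right.
Qed.

End Ultra.
Section Sep.
Context {d : Order.disp_t} {A : ctbDistrLatticeType d}.

Lemma le_compl0 (x y : A) : Order.meet x (Order.compl y) = \bot -> x <= y.
Proof. by move=> H; rewrite -[y]complK -disj_leC H. Qed.

Lemma separation (S : set (set A)) (a : A) : countable S -> a != \bot ->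
  exists F, Qfilter S F /\ F a.
Proof.
move=> /countable_injP [f finj] a0.
pose Req n (c : A) := forall X, S X -> f X = n -> forall m, is_meet X m ->
   c <= m \/ exists x, X x /\ c <= Order.compl x.
have stepP : forall n (b : A), exists c, b != \bot -> [/\ c <= b, c != \bot & Req n c].
  move=> n b.
  case: (pselect (exists X, S X /\ f X = n /\ exists m, is_meet X m /\ ~ (b <= m))).
    move=> [X [SX [fX [m [[mlb mglb] nbm]]]]].
    have [x [Xx Hx]] : exists x, X x /\ Order.meet b (Order.compl x) != \bot.
      case: (pselect (exists x, X x /\ Order.meet b (Order.compl x) != \bot)) => // H.
      exfalso; apply: nbm; apply: mglb => x Xx; apply: le_compl0.
      case: (pselect (Order.meet b (Order.compl x) = \bot)) => // H'.
      by exfalso; apply: H; exists x; split => //; apply/eqP.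
    exists (Order.meet b (Order.compl x)) => _; split => //; first exact: leIl.
    move=> X' SX' fX' m' _; right; exists x; split; last exact: leIr.
    have -> : X' = X by apply: finj; rewrite ?in_setE // fX fX'.
    done.
  move=> nex; exists b => b0; split => // X SX fX m Hm; left.
  case: (pselect (b <= m)) => // H; exfalso; apply: nex; exists X; split => //; split => //; by exists m.
pose g n b := proj1_sig (cid (stepP n b)).
have gP n b : b != \bot -> [/\ g n b <= b, g n b != \bot & Req n (g n b)].
  exact: (proj2_sig (cid (stepP n b))).
pose fix sa n := if n is k.+1 then g k (sa k) else a.
have sa0 : forall n, sa n != \bot.
  by elim => [//|n IH] /=; have [] := gP n _ IH.
have saR : forall n, Req n (sa n.+1).
  by move=> n /=; have [] := gP n _ (sa0 n).
have sadec : forall n k, (n <= k)%N -> sa k <= sa n.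
  move=> n; elim => [|k IH]; first by rewrite leqn0 => /eqP ->.
  rewrite leq_eqVlt => /orP[/eqP -> //|]; rewrite ltnS => /IH.
  apply: le_trans => /=; by have [] := gP k _ (sa0 k).
pose G z := exists n, sa n <= z.
have PG : proper_filter G.
  split.
  - by exists 0%N; exact: lex1.
  - by move=> [n]; rewrite lex0; apply/negP; exact: sa0.
  - by move=> x y [n Hn] xy; exists n; exact: le_trans xy.
  - move=> x y [n Hn] [k Hk]; exists (maxn n k); rewrite lexI; apply/andP; split.
      by apply: le_trans Hn; apply: sadec; exact: leq_maxl.
    by apply: le_trans Hk; apply: sadec; exact: leq_maxr.
have [F [PF GF]] := @ultra_ext _ _ G PG.
have [[Ftop Fbot Fup Fmeet] Fpr] := PF.
exists F; split; last by apply: GF; exists 0%N.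
split => // X SX m Hm XF.
case: (saR (f X) X SX erefl m Hm) => [H|[x [Xx Hx]]].
  by apply: GF; exists (f X).+1.
have Fc : F (Order.compl x) by apply: GF; exists (f X).+1.
by exfalso; apply: Fbot; rewrite -(meetxC x); apply: Fmeet => //; exact: XF.
Qed.

End Sep.

Theorem mainTheorem7 (d : Order.disp_t) (A : ctbDistrLatticeType d)
  (box : A -> A) (S : set (set A)) :
  countable S ->
  K_modal_hom box (JbarV S box) (Qrep S) /\ injective (Qrep S) /\
  (forall X, S X -> forall m, is_meet X m ->
     Qrep S m = \bigcap_(x in X) Qrep S x).
Proof.
move=> cS.
have ultra : forall (G : Qpt S) x, proj1_sig G x \/ proj1_sig G (Order.compl x).
  move=> [F [[[Ftop Fbot Fup Fmeet] Fpr] FQ]] x /=; apply: Fpr; by rewrite joinxC.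
have notboth : forall (G : Qpt S) x, proj1_sig G x -> ~ proj1_sig G (Order.compl x).
  move=> [F [[[Ftop Fbot Fup Fmeet] Fpr] FQ]] x /= Fx Fcx; apply: Fbot.
  by rewrite -(meetxC x); exact: Fmeet.
have inj : injective (Qrep S).
  move=> x y Hxy; case: (pselect (x = y)) => // nxy; exfalso.
  have [z [z0 Hz]] : exists z, z != \bot /\
      ((z <= x /\ z <= Order.compl y) \/ (z <= y /\ z <= Order.compl x)).
    case: (pselect (Order.meet x (Order.compl y) = \bot)) => H1.
      case: (pselect (Order.meet y (Order.compl x) = \bot)) => H2.
        by exfalso; apply: nxy; apply: le_anti; rewrite !le_compl0.
      exists (Order.meet y (Order.compl x)); split; first exact/eqP.
      by right; split; [exact: leIl|exact: leIr].
    exists (Order.meet x (Order.compl y)); split; first exact/eqP.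
    by left; split; [exact: leIl|exact: leIr].
  have [F [QF Fz]] := @separation _ _ S z cS z0.
  pose G : Qpt S := exist _ F QF.
  have eqG : F x = F y by exact: (f_equal (fun h => h G) Hxy).
  have [[[_ _ Fup _] _] _] := QF.
  case: Hz => [[zx zy]|[zy zx]].
    apply: (notboth G y) => /=; first by rewrite -eqG; exact: Fup zx.
    exact: Fup zy.
  apply: (notboth G x) => /=; first by rewrite eqG; exact: Fup zy.
  exact: Fup zx.
split; last split => //.
  split; [|split; [|split; [|split; [|split]]]].
  - move=> x y; apply/seteqP; split => -[F [[[Ftop Fbot Fup Fmeet] Fpr] FQ]] /=.
      by rewrite /Qrep /=; apply: Fpr.
    rewrite /Qrep /= => -[Fx|Fy]; [apply: (Fup x) => //; exact: leUl|apply: (Fup y) => //; exact: leUr].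
  - move=> x y; apply/seteqP; split => -[F [[[Ftop Fbot Fup Fmeet] Fpr] FQ]] /=.
      rewrite /Qrep /= => Fxy; split; [apply: (Fup _ x Fxy); exact: leIl|apply: (Fup _ y Fxy); exact: leIr].
    by rewrite /Qrep /= => -[]; apply: Fmeet.
  - move=> x; apply/seteqP; split => G /=.
      move=> Hc; change (~ Qrep S x G) => Hx; exact: (notboth G x).
    move=> Hn; change (~ Qrep S x G) in Hn; by case: (ultra G x).
  - apply/seteqP; split => -[F [[[Ftop Fbot Fup Fmeet] Fpr] FQ]] //=.
  - apply/seteqP; split => -[F [[[Ftop Fbot Fup Fmeet] Fpr] FQ]] //=.
  - move=> x; apply/seteqP; split => G /=; rewrite /Kbox /JbarV /Qrep.
      by move=> Gb; exists x; split.
    by move=> [y [Gy Hy]]; have -> : x = y by apply: inj; exact: Hy.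
move=> X SX m Hm; apply/seteqP; split => -[F [[[Ftop Fbot Fup Fmeet] Fpr] FQ]] /=.
  rewrite /Qrep /= => Fm x Xx /=; apply: (Fup m) => //; exact: (proj1 Hm).
rewrite /Qrep /= => Hall; apply: (FQ X SX m Hm) => x Xx; exact: Hall.
Qed.
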